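(* Let $\mathcal{A}$ be a finite alphabet and $\mathcal{F}$ a finite set of finite patterns on $\mathbb{Z}^d$. If the game $\Gamma(\mathcal{A},\mathcal{F},\mathbb{Z}^d)$ is winning for $A$, then it has a finite game value. Moreover, there exists $n$ such that $A$ has a winning strategy which never plays outside $\llbracket -n,n\rrbracket^d$.
   Context: Fix $d\ge 1$. A pattern is a pair $p=(S,f)$ with $S\subseteq\mathbb{Z}^d$ and $f\in\mathcal{A}^S$. A finite pattern $q=(S',g)$ appears in $p=(S,f)$ if there is $v\in\mathbb{Z}^d$ with $v+S'\subseteq S$ and $f(v+j)=g(j)$ for all $j\in S'$. For a finite set $\mathcal{F}$ of finite patterns and $E\subseteq\mathbb{Z}^d$, the Domino game $\Gamma(\mathcal{A},\mathcal{F},E)$: two players $A$ and $B$ alternate turns, $A$ first, starting from the empty pattern; on a turn the current player either passes or colours one uncoloured cell $i\in E$ with some $a\in\mathcal{A}$. A position $(p,\rho)$ (current pattern $p$, player to move $\rho$) is final if a pattern of $\mathcal{F}$ appears in $p$; then the game ends and $A$ wins; $B$ wins if a final position never occurs. Positions winning for $A$ and their values are defined inductively: a final position is winning for $A$ with value $0$; if $\rho=A$ and some move leads to a position $(p',B)$ winning for $A$, then $(p,A)$ is winning for $A$ with value $\min v(p',B)+1$ over such moves; if $\rho=B$ and every move leads to a position $(p',A)$ winning for $A$, then $(p,B)$ is winning for $A$ with value $\sup v(p',A)+1$ over all moves (possibly infinite). The game is winning for $A$ if the initial position (empty pattern, $A$ to move) is winning for $A$, and its game value is the value of that position. $\llbracket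 -n,n\rrbracket=\{-n,\dots,n\}$. *)

(* Defs.v *)
From mathcomp Require Import all_boot all_order all_algebra.
From Stdlib Require Lists.List.
Set Implicit Arguments. Unset Strict Implicit. Unset Printing Implicit Defensive.
Import Order.TTheory GRing.Theory Num.Theory.

Section Domino.
Variables (d : nat) (A : finType).

Definition cell := 'rV[int]_d.

(* a pattern p = (S,f): S = {i | p i <> None}, f i = the letter *)
Definition pattern := cell -> option A.

Definition empty_pattern : pattern := fun _ => None.

Record finpat := FinPat { fdom : seq cell; fcol : cell -> A }.

Definition appears (q : finpat) (p : pattern) : Prop :=
  exists v : cell, forall j, j \in fdom q -> p (v + j)%R = Some (fcol q j).

Definition final (F : seq finpat) (p : pattern) : Prop :=
  exists2 q, Stdlib.Lists.List.In q F & appears q p.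

(* None = pass ; Some (i, a) = colour cell i with a *)
Definition move := option (cell * A).

Definition legal (p : pattern) (m : move) : Prop :=
  match m with None => True | Some (i, _) => p i = None end.

Definition play_move (p : pattern) (m : move) : pattern :=
  match m with
  | None => p
  | Some (i, a) => fun j => if j == i then Some a else p j
  end.

(* player to move: true = A, false = B.
   Winning positions for A (game Gamma(A,F,Z^d)), inductively. *)
Inductive Win (F : seq finpat) : pattern -> bool -> Prop :=
  | Win_final p r : final F p -> Win F p r
  | Win_A p m : legal p m -> Win F (play_move p m) false -> Win F p true
  | Win_B p : (forall m, legal p m -> Win F (play_move p m) true) -> Win F p false.

(* WinLe F n p r : (p,r) is winning for A with value <= n
   (values in N u {oo}; value = min+1 for A, sup+1 for B, 0 for final). *)
Inductive WinLe (F : seq finpat) : nat -> pattern -> bool -> Prop :=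
  | WinLe_final n p r : final F p -> WinLe F n p r
  | WinLe_A n p m : legal p m -> WinLe F n (play_move p m) false ->
      WinLe F n.+1 p true
  | WinLe_B n p : (forall m, legal p m -> WinLe F n (play_move p m) true) ->
      WinLe F n.+1 p false.

Definition finite_game_value (F : seq finpat) : Prop :=
  exists n : nat, WinLe F n empty_pattern true.

Definition strategy := seq move -> move.

(* a play: the infinite sequence of moves, A moving at even times *)
Definition play := nat -> move.

Definition history (m : play) (k : nat) : seq move := [seq m i | i <- iota 0 k].

Definition pat_after (m : play) (k : nat) : pattern :=
  foldl play_move empty_pattern (history m k).

Definition consistent (s : strategy) (m : play) : Prop :=
  forall k, ~~ odd k -> m k = s (history m k).

Definition in_box (n : nat) (i : cell) : Prop :=
  forall k : 'I_d, (`|i ord0 k| <= n%:Z)%R.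

Definition move_in_box (n : nat) (m : move) : Prop :=
  match m with None => True | Some (i, _) => in_box n i end.

Definition winning_strategy_in_box (F : seq finpat) (n : nat) (s : strategy) : Prop :=
  forall m : play, consistent s m ->
    (forall k, odd k -> legal (pat_after m k) (m k)) ->
    exists k, final F (pat_after m k) /\
      forall i, i < k -> ~~ odd i ->
        legal (pat_after m i) (m i) /\ move_in_box n (m i).

End Domino.

(* Main.v *)
Require Import Defs.
From mathcomp Require Import all_boot all_order all_algebra.
From mathcomp Require Import zify.
From Stdlib Require Import Classical ClassicalEpsilon.
Set Implicit Arguments. Unset Strict Implicit. Unset Printing Implicit Defensive.
Import GRing.Theory Num.Theory.

Section Proof.
Variables (d : nat) (A : finType) (F : seq (finpat d A)).

Notation pat := (pattern d A).
Notation mv := (move d A).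

Inductive WB (b : nat) : nat -> pat -> bool -> Prop :=
  | WB_final n p r : final F p -> WB b n p r
  | WB_A n p m : legal p m -> move_in_box b m -> WB b n (play_move p m) false ->
      WB b n.+1 p true
  | WB_B n p : (forall m, legal p m -> WB b n (play_move p m) true) ->
      WB b n.+1 p false.

Lemma in_boxP n (c : cell d) : in_box n c <-> forall k, (absz (c ord0 k) <= n)%N.
Proof.
rewrite /in_box; split => H k; have := H k; lia.
Qed.

Lemma in_box_mono n n' (c : cell d) : (n <= n')%N -> in_box n c -> in_box n' c.
Proof. move=> le /in_boxP H; apply/in_boxP => k; have := H k; lia. Qed.

Lemma WB_mono b n p r : WB b n p r -> forall n' b', (n <= n')%N -> (b <= b')%N ->
  WB b' n' p r.
Proof.
elim=> {n p r} [n p r Hf|n p m Hl Hb _ IH|n p _ IH] n' b' Hn Hb'.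
- exact: WB_final.
- case: n' Hn => // n' Hn. apply: (WB_A (m := m)) => //; last exact: IH.
  case: m Hl Hb {IH} => [[c a]|] //= _; exact: in_box_mono.
- case: n' Hn => // n' Hn. apply: WB_B => m Hm; exact: IH.
Qed.

Lemma final_ext (p q : pat) : (forall c a, p c = Some a -> q c = Some a) ->
  final F p -> final F q.
Proof.
move=> E [qq Hin [v Hv]]; exists qq => //; exists v => j Hj; apply: E; exact: Hv.
Qed.

Lemma WB_ext b n p r : WB b n p r -> forall q : pat,
  (forall c a, p c = Some a -> q c = Some a) ->
  (forall c, in_box b c -> q c = p c) -> WB b n q r.
Proof.
elim=> {n p r} [n p r Hf|n p m Hl Hb _ IH|n p _ IH] q E1 E2.
- apply: WB_final; exact: final_ext Hf.
- apply: (WB_A (m := m)) => //.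
  + case: m Hl Hb {IH} => [[c a]|] //= Hl Hb; by rewrite E2.
  + apply: IH.
    * case: m Hl Hb => [[c a]|] //= Hl Hb c' a'; case: (c' == c) => //; exact: E1.
    * case: m Hl Hb => [[c a]|] //= Hl Hb c' Hc'; case: (c' == c) => //; exact: E2.
- apply: WB_B => m Hm; apply: (IH m).
  + case: m Hm => [[c a] Hm|//] /=; case Hp: (p c) => [x|] //.
    by rewrite /legal (E1 _ _ Hp) in Hm.
  + case: m Hm => [[c a]|] //= Hm c' a'; case: (c' == c) => //; exact: E1.
  + case: m Hm => [[c a]|] //= Hm c' Hc'; case: (c' == c) => //; exact: E2.
Qed.

Lemma fin_bound (T : finType) (P : T -> nat -> nat -> Prop) :
  (forall t n b n' b', (n <= n')%N -> (b <= b')%N -> P t n b -> P t n' b') ->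
  (forall t, exists n b, P t n b) -> exists N B, forall t, P t N B.
Proof.
move=> Mo Ex.
suff [N [B H]] : exists N B, forall t, t \in enum T -> P t N B.
  by exists N, B => t; apply: H; rewrite mem_enum.
elim: (enum T) => [|x s [N [B IH]]]; first by exists 0%N, 0%N.
have [n [b Hx]] := Ex x.
exists (maxn N n), (maxn B b) => t; rewrite inE => /orP [/eqP ->|Ht].
- by apply: Mo Hx; rewrite ?leq_maxr.
- by apply: Mo (IH _ Ht); rewrite ?leq_maxl.
Qed.

Definition normc (c : cell d) : nat := \max_(k < d) absz (c ord0 k).

Lemma in_box_normc c : in_box (normc c) c.
Proof. apply/in_boxP => k; exact: (leq_bigmax_cond k). Qed.

Definition gcell (b : nat) (f : {ffun 'I_d -> 'I_(2 * b).+1}) : cell d :=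
  (\row_k (((f k : nat)%:Z) - b%:Z))%R.

Lemma gcell_surj b (c : cell d) : in_box b c -> exists f, @gcell b f = c.
Proof.
move=> /in_boxP H.
exists [ffun k => inord (absz (c ord0 k + b%:Z)%R)].
apply/rowP => k; rewrite /gcell !mxE ffunE.
have Hk := H k.
rewrite inordK; last by lia.
rewrite ord1. have E : (0%R : 'I_1) = ord0 by apply/val_inj. rewrite E. lia.
Qed.

Lemma Win_WB p r : Win F p r -> exists n b, WB b n p r.
Proof.
elim=> {p r} [p r Hf|p m Hl _ [n [b IH]]|p _ IH].
- by exists 0%N, 0%N; apply: WB_final.
- case: m Hl IH => [[c a]|] Hl IH.
  + exists n.+1, (maxn b (normc c)); apply: (WB_A (m := Some (c, a))) => //.
    * apply: in_box_mono (in_box_normc c); exact: leq_maxr.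
    * exact: (WB_mono IH (leqnn n) (leq_maxl b (normc c))).
  + by exists n.+1, b; apply: (WB_A (m := None)).
- have [n0 [b0 H0]] := IH None I.
  pose P (t : {ffun 'I_d -> 'I_(2 * b0).+1} * A) n b :=
    legal p (Some (@gcell b0 t.1, t.2)) ->
    WB b n (play_move p (Some (@gcell b0 t.1, t.2))) true.
  have [N [B HNB]] : exists N B, forall t, P t N B.
    apply: fin_bound.
    - move=> t n b n' b' Hn Hb Ht Hl; exact: WB_mono (Ht Hl) _ _ Hn Hb.
    - move=> t; case: (classic (legal p (Some (@gcell b0 t.1, t.2)))) => Hl.
      + have [n [b Hnb]] := IH _ Hl; by exists n, b.
      + by exists 0%N, 0%N.
  exists (maxn N n0).+1, (maxn B b0); apply: WB_B => m Hm.
  case: m Hm => [[c a]|] Hm.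
  + case: (classic (in_box b0 c)) => Hc.
    * have [f Hf] := gcell_surj Hc.
      have := HNB (f, a); rewrite /P /= Hf => H; have := H Hm.
      by move/WB_mono; apply; rewrite ?leq_maxl.
    * have H1 : WB b0 n0 (play_move p (Some (c, a))) true.
        apply: (WB_ext H0).
        -- move=> c' a' Hp /=; case: eqP => // E; subst c'.
           by rewrite /legal in Hm; rewrite /= Hm in Hp.
        -- move=> c' Hc' /=; case: eqP => // E; subst c'.
           by exfalso; apply: Hc.
      apply: (WB_mono H1); by rewrite ?leq_maxr.
  + apply: (WB_mono H0); by rewrite ?leq_maxr.
Qed.

Lemma WB_WinLe b n p r : WB b n p r -> WinLe F n p r.
Proof.
elim=> {n p r} [n p r Hf|n p m Hl _ _ IH|n p _ IH].
- exact: WinLe_final.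
- exact: (WinLe_A (m := m)).
- exact: WinLe_B.
Qed.

Definition val_ok b (p : pat) (m : mv) j :=
  legal p m /\ move_in_box b m /\ WB b j (play_move p m) false.

Definition goodm b (p : pat) (m : mv) :=
  exists j, val_ok b p m j /\ forall m' j', val_ok b p m' j' -> (j <= j')%N.

Lemma goodm_ex b p : (exists m j, val_ok b p m j) -> exists m, goodm b p m.
Proof.
move=> [m [j Hj]].
elim/ltn_ind: j m Hj => j IH m Hj.
case: (classic (exists m' j', val_ok b p m' j' /\ (j' < j)%N)).
- move=> [m' [j' [H1 H2]]]; exact: IH H1.
- move=> Hn; exists m, j; split => // m' j' Hv.
  rewrite leqNgt; apply/negP => Hlt; apply: Hn; by exists m', j'.
Qed.

Definition strat b : strategy d A :=
  fun h => epsilon (inhabits None) (goodm b (foldl (@play_move d A) (@empty_pattern d A) h)).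

Lemma pat_afterS (m : play d A) i :
  pat_after m i.+1 = play_move (pat_after m i) (m i).
Proof.
by rewrite /pat_after /history -addn1 iotaD map_cat foldl_cat /= add0n.
Qed.

Lemma strat_wins b n : WB b n (@empty_pattern d A) true ->
  winning_strategy_in_box F b (strat b).
Proof.
move=> H0 m Hc HB.
suff main : forall t i k, ~~ odd i -> (k <= t)%N -> WB b k (pat_after m i) true ->
  (forall i', (i' < i)%N -> ~~ odd i' -> legal (pat_after m i') (m i') /\
      move_in_box b (m i')) ->
  exists K, final F (pat_after m K) /\ forall i', (i' < K)%N -> ~~ odd i' ->
      legal (pat_after m i') (m i') /\ move_in_box b (m i').
  by apply: (main n 0%N n) => //.
elim=> [|t IH] i k Hi Hk Hw Hprev.
- case: (classic (final F (pat_after m i))) => Hf; first by exists i.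
  by exfalso; move: Hk; rewrite leqn0 => /eqP E; subst k; inversion Hw.
case: (classic (final F (pat_after m i))) => Hf; first by exists i.
inversion Hw as [|k0 p0 m0 Hl0 Hb0 Hw0 Ek Ep|]; subst; first by [].
have Hex : exists mm, goodm b (pat_after m i) mm.
  by apply: goodm_ex; exists m0, k0.
have Hmi : m i = strat b (history m i) by apply: Hc.
have Hg : goodm b (pat_after m i) (m i).
  by rewrite Hmi /strat; apply: epsilon_spec.
have [j [[Hl [Hbx Hwj]] Hmin]] := Hg.
have Hjk : (j <= k0)%N by apply: (Hmin m0 k0).
have Hprev1 : forall i', (i' < i.+1)%N -> ~~ odd i' ->
    legal (pat_after m i') (m i') /\ move_in_box b (m i').
  move=> i'; rewrite ltnS leq_eqVlt => /orP [/eqP ->|]; first by [].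
  exact: Hprev.
rewrite -pat_afterS in Hwj.
case: (classic (final F (pat_after m i.+1))) => Hf1; first by exists i.+1.
inversion Hwj as [ | | j1 p1 Hall Ej Ep]; subst; first by [].
have HlB : legal (pat_after m i.+1) (m i.+1) by apply: HB; rewrite /= Hi.
have Hw2 := Hall _ HlB; rewrite -pat_afterS in Hw2.
apply: (IH i.+2 j1) => //.
- by rewrite /= negbK.
- lia.
- move=> i'; rewrite ltnS leq_eqVlt => /orP [/eqP ->|]; first by rewrite /= Hi.
  exact: Hprev1.
Qed.

End Proof.

Theorem corollary1 (d : nat) (A : finType) (F : seq (finpat d A)) :
  0 < d ->
  Win F (@empty_pattern d A) true ->
  finite_game_value F /\
  exists n : nat, exists s : strategy d A, winning_strategy_in_box F n s.
Proof.
move=> _ /Win_WB [n [b H]]; split.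
- exists n; exact: WB_WinLe H.
- exists b, (strat F b); exact: strat_wins H.
Qed.
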